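(* Let $G$ be a connected graph with $n\ge 2$ nodes and diameter $D$, with nonnegative real loads, and run Algorithm 1 (described in the context). If the discrepancy of $G$ at the beginning of some round is $K$, then after that round the potential $p(G)$ has decreased by at least $K^2/(2D)$.
   Context: $G=(V,E)$ is an undirected connected graph, $n=|V|$, $D$ its diameter; each node $u$ holds a load $load(u)\ge 0$ (real). $L_{max},L_{min}$ denote the current maximum and minimum load, the discrepancy is $K=L_{max}-L_{min}$, $L_{avg}$ the average load (invariant under transfers), and the potential is $p(G)=\sum_{u\in V}(load(u)-L_{avg})^2$. Algorithm 1 (single proposal, continuous) proceeds in synchronous rounds; in each round, using the loads at the start of the round: (1) every node $u$ having at least one neighbor with strictly smaller load picks a neighbor $v$ maximizing $load(u)-load(v)$ (ties broken arbitrarily) and sends $v$ a proposal of value $p_{uv}=(load(u)-load(v))/2$; (2) every node that received at least one proposal accepts exactly one proposal of maximum value (ties arbitrary); (3) all accepted transfers are executed simultaneously (each accepted proposal $p_{wu}$ moves $p_{wu}$ from $w$ to $u$), and nodes report their new loads to neighbors. Thus each node gives load in at most one transfer and receives in at most one transfer per round. *)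

(* Defs.v *)
From mathcomp Require Import all_boot all_order all_algebra.
Set Implicit Arguments. Unset Strict Implicit. Unset Printing Implicit Defensive.
Import Order.TTheory GRing.Theory Num.Theory.
Local Open Scope ring_scope.

Section Defs.
Variable V : finType.

Definition simple_graph (e : rel V) : Prop := symmetric e /\ irreflexive e.

Definition connected_graph (e : rel V) : Prop := forall x y : V, connect e x y.

Definition walk_len (e : rel V) (x y : V) (k : nat) : Prop :=
  exists p : seq V, [/\ path e x p, last x p = y & size p = k].

Definition is_diameter (e : rel V) (D : nat) : Prop :=
  (forall x y, exists k, (k <= D)%N /\ walk_len e x y k) /\
  (exists x y, forall k, walk_len e x y k -> (D <= k)%N).

Variable R : realFieldType.

Definition Lavg (l : V -> R) : R := (\sum_(u : V) l u) / #|V|%:R.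

Definition potential (l : V -> R) : R := \sum_(u : V) (l u - Lavg l) ^+ 2.

Definition is_discrepancy (l : V -> R) (K : R) : Prop :=
  exists umax umin : V, K = l umax - l umin /\
    forall w, l umin <= l w /\ l w <= l umax.

(* step (1): proposals. prop u = Some v means u proposes to v. *)
Definition valid_proposals (e : rel V) (l : V -> R) (prop : V -> option V) : Prop :=
  forall u,
    match prop u with
    | Some v => [/\ e u v, l v < l u & forall w, e u w -> l u - l w <= l u - l v]
    | None => forall w, e u w -> l u <= l w
    end.

Definition prop_value (l : V -> R) (prop : V -> option V) (w : V) : R :=
  if prop w is Some v then (l w - l v) / 2 else 0.

(* step (2): acc v = Some w means v accepts the proposal from w,
   which must be one of maximal value among those v received. *)
Definition valid_acceptances (l : V -> R) (prop : V -> option V)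
    (acc : V -> option V) : Prop :=
  forall v,
    match acc v with
    | Some w => prop w = Some v /\
        forall w', prop w' = Some v -> prop_value l prop w' <= prop_value l prop w
    | None => forall w, prop w <> Some v
    end.

Definition sent (l : V -> R) (prop acc : V -> option V) (u : V) : R :=
  if prop u is Some v then (if acc v == Some u then (l u - l v) / 2 else 0) else 0.

Definition received (l : V -> R) (acc : V -> option V) (v : V) : R :=
  if acc v is Some w then (l w - l v) / 2 else 0.

(* step (3): simultaneous execution *)
Definition new_loads (l : V -> R) (prop acc : V -> option V) : V -> R :=
  fun u => l u - sent l prop acc u + received l acc u.

Definition alg1_round (e : rel V) (l l' : V -> R) : Prop :=
  exists prop acc : V -> option V,
    [/\ valid_proposals e l prop, valid_acceptances l prop acc &
        l' = new_loads l prop acc].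

End Defs.

(* Main.v *)
Require Import Defs.
From mathcomp Require Import all_boot all_order all_algebra.
From mathcomp Require Import ring lra.
Set Implicit Arguments. Unset Strict Implicit. Unset Printing Implicit Defensive.
Import Order.TTheory GRing.Theory Num.Theory.
Local Open Scope ring_scope.

Section Part1.
Variables (V : finType) (R : realFieldType) (e : rel V) (l : V -> R) (prop acc : V -> option V).
Hypothesis hp : valid_proposals e l prop.
Hypothesis ha : valid_acceptances l prop acc.

Lemma reindex (g : V -> V -> R) :
  \sum_u (if prop u is Some v then (if acc v == Some u then g u v else 0) else 0) =
  \sum_v (if acc v is Some w then g w v else 0).
Proof.
pose T u v := (prop u == Some v) && (acc v == Some u).
transitivity (\sum_u \sum_v (if T u v then g u v else 0)).
  apply: eq_bigr => u _; rewrite /T.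
  case: (prop u) => [v0|].
    rewrite (bigD1 v0) //= eqxx /= big1 ?addr0 // => v /negPf hv.
    by rewrite (inj_eq (@Some_inj _)) eq_sym hv.
  by rewrite big1.
rewrite exchange_big; apply: eq_bigr => v _; rewrite /T.
have := ha v; case: (acc v) => [w0 [hw0 _]|hn].
  rewrite (bigD1 w0) //= hw0 !eqxx /= big1 ?addr0 // => u /negPf hu.
  by rewrite [Some w0 == _]eq_sym (inj_eq (@Some_inj _)) hu andbF.
by rewrite big1 // => u _; rewrite andbF.
Qed.

Lemma sent_ge0 u : 0 <= sent l prop acc u.
Proof.
rewrite /sent; have := hp u; case: (prop u) => [v [_ hlt _]|_] //.
case: ifP => // _; apply: divr_ge0; [rewrite subr_ge0 ltW //| by []].
Qed.

Lemma received_ge0 v : 0 <= received l acc v.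
Proof.
rewrite /received; have := ha v; case: (acc v) => [w [hw _]|_] //.
have := hp w; rewrite hw => -[_ hlt _].
apply: divr_ge0; [rewrite subr_ge0 ltW //| by []].
Qed.

Lemma sum_sent : \sum_u sent l prop acc u = \sum_v received l acc v.
Proof. exact: (reindex (fun w v => (l w - l v) / 2)). Qed.

Lemma sq_decrease :
  \sum_u (l u ^+ 2 - new_loads l prop acc u ^+ 2) >= \sum_v 2 * received l acc v ^+ 2.
Proof.
pose A u := 2 * l u * sent l prop acc u - sent l prop acc u ^+ 2.
pose B u := - 2 * l u * received l acc u - received l acc u ^+ 2.
apply: (le_trans (y := \sum_u (A u + B u))); last first.
  apply: ler_sum => u _; rewrite /A /B /new_loads.
  have := sent_ge0 u; have := received_ge0 u.
  set s := sent _ _ _ _; set r := received _ _ _ => hr hs.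
  have : 0 <= s * r by apply: mulr_ge0.
  move=> h; rewrite -subr_ge0; nra.
rewrite big_split /=.
have -> : \sum_u A u = \sum_v (if acc v is Some w then
      2 * l w * ((l w - l v) / 2) - ((l w - l v) / 2) ^+ 2 else 0).
  rewrite -(reindex (fun w v => 2 * l w * ((l w - l v) / 2) - ((l w - l v) / 2) ^+ 2)).
  apply: eq_bigr => u _; rewrite /A /sent.
  case: (prop u) => [v|]; last by rewrite mulr0 expr0n /= subr0.
  by case: ifP => _ //; rewrite mulr0 expr0n /= subr0.
rewrite -big_split /=; apply: ler_sum => v _; rewrite /B /received.
case: (acc v) => [w|]; last by rewrite expr0n /= !mulr0 !subr0 add0r.
rewrite -subr_ge0 le_eqVlt; apply/orP; left; apply/eqP; by field.
Qed.

End Part1.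

Section Part2.
Variables (V : finType) (R : realFieldType) (e : rel V) (l : V -> R) (umin : V).

Fixpoint lev (t : nat) : {set V} :=
  if t is t'.+1 then lev t' :|: [set u | [exists w in lev t', e u w]] else [set umin].

Lemma lev_mono t s : (t <= s)%N -> lev t \subset lev s.
Proof.
elim: s => [|s IH]; first by rewrite leqn0 => /eqP ->.
rewrite leq_eqVlt => /orP[/eqP -> //| hts].
apply: subset_trans (IH hts) _; exact: subsetUl.
Qed.

Lemma walk_lev x p : path e x p -> last x p = umin -> x \in lev (size p).
Proof.
elim: p x => [|z p IH] x /=; first by move=> _ ->; rewrite set11.
case/andP=> hxz hp hl; rewrite inE; apply/orP; right; rewrite inE.
by apply/existsP; exists z; rewrite IH.
Qed.

Lemma umin_lev t : umin \in lev t.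
Proof. by apply: (subsetP (lev_mono (leq0n t))); rewrite set11. Qed.

Definition m t := @Order.arg_max _ _ V umin (fun u => u \in lev t) l.

Lemma m_prop t : m t \in lev t /\ forall w, w \in lev t -> l w <= l (m t).
Proof.
rewrite /m; case: arg_maxP; first exact: umin_lev.
by move=> i hi hmax; split.
Qed.

End Part2.

Section Part3.
Variables (V : finType) (R : realFieldType) (e : rel V) (l : V -> R) (umin : V)
  (prop acc : V -> option V).
Hypothesis hp : valid_proposals e l prop.
Hypothesis ha : valid_acceptances l prop acc.

Let M t := l (m e l umin t).
Let inc t := M t.+1 - M t.
Let vt t := odflt umin (prop (m e l umin t.+1)).
Let X v := 2 * received l acc v.

Lemma M_mono t : M t <= M t.+1.
Proof.
have [h1 _] := m_prop e l umin t; have [_ h2] := m_prop e l umin t.+1.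
apply: h2; apply: (subsetP (lev_mono e umin (leqnSn t))) h1.
Qed.

Lemma inc_ge0 t : 0 <= inc t.
Proof. by rewrite /inc subr_ge0 M_mono. Qed.

Lemma X_ge0 v : 0 <= X v.
Proof.
rewrite /X /received; have := ha v; case: (acc v) => [w [hw _]|_]; last by rewrite mulr0.
have := hp w; rewrite hw => -[_ hlt _]; rewrite mulr_ge0 // divr_ge0 // subr_ge0 ltW //.
Qed.

Lemma key t : 0 < inc t -> l (vt t) <= M t /\ M t.+1 - l (vt t) <= X (vt t).
Proof.
move=> hinc; rewrite /inc /M in hinc *; rewrite /X.
have [hin _] := m_prop e l umin t.+1; have [_ hmax] := m_prop e l umin t.
set u := m e l umin t.+1 in hin hinc *.
have hnot : u \notin lev e umin t.
  apply/negP => /hmax => h; lra.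
move: hin; rewrite /= inE (negPf hnot) /= inE => /existsP[w /andP[hw huw]].
have hlw := hmax w hw.
rewrite /vt -/u; have := hp u; case hpu: (prop u) => [v|] /=; last first.
  move=> /(_ w huw) h; lra.
move=> [_ hvu hbest]; have := hbest w huw => hb.
split; first lra.
rewrite /received; have := ha v; case: (acc v) => [w' [hw' hmx]|hn]; last first.
  by have := hn u; rewrite hpu.
have := hmx u hpu; rewrite /prop_value hpu hw' => h.
lra.
Qed.

Definition P t v := (0 < inc t) && (vt t == v).

Lemma per_v v N : let s := \sum_(t < N) (if P t v then inc t else 0) in
  s = 0 \/ (s <= X v /\ s <= M N - l v).
Proof.
elim: N => [|N IH] /=; first by rewrite big_ord0; left.
rewrite big_ord_recr /=; set s := \sum_(i < N) _ in IH *.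
have hmono := M_mono N.
case hP: (P N v); last by rewrite addr0; case: IH => [->|[h1 h2]]; [left|right; split; lra].
move: hP; rewrite /P => /andP[hinc /eqP hv].
have [k1 k2] := key hinc; rewrite hv in k1 k2.
right; rewrite /inc in hinc *; case: IH => [->|[h1 h2]]; split; lra.
Qed.

Lemma sq_v v N : \sum_(t < N) (if P t v then inc t ^+ 2 else 0) <= X v ^+ 2.
Proof.
have hs : \sum_(t < N) (if P t v then inc t else 0) <= X v.
  case: (per_v v N) => [->|[]//]; exact: X_ge0.
apply: (le_trans (y := \sum_(t < N) X v * (if P t v then inc t else 0))).
  apply: ler_sum => t _; case hP: (P t v); last by rewrite mulr0.
  move: hP => /andP[hinc /eqP hv]; have [k1 k2] := key hinc.
  rewrite hv in k1 k2; have hle : inc t <= X v by rewrite /inc; lra.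
  by rewrite expr2; apply: ler_wpM2r => //; exact: ltW.
rewrite -mulr_sumr expr2; apply: ler_wpM2l => //; exact: X_ge0.
Qed.

Lemma Part3_total N : \sum_(t < N) inc t ^+ 2 <= \sum_v X v ^+ 2.
Proof.
have -> : \sum_(t < N) inc t ^+ 2 = \sum_(t < N) \sum_v (if P t v then inc t ^+ 2 else 0).
  apply: eq_bigr => t _; rewrite /P.
  case: (ltrP 0 (inc t)) => h /=.
    rewrite (bigD1 (vt t)) //= eqxx big1 ?addr0 // => v /negPf hv.
    by rewrite eq_sym hv.
  have -> : inc t = 0 by have := inc_ge0 t; lra.
  by rewrite expr0n /= big1.
rewrite exchange_big; apply: ler_sum => v _; exact: sq_v.
Qed.

Lemma telesc N : \sum_(t < N) inc t = M N - M 0.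
Proof.
elim: N => [|N IH]; first by rewrite big_ord0 subrr.
by rewrite big_ord_recr /= IH /inc addrC addrA subrK.
Qed.

End Part3.

Lemma cs (R : realFieldType) N (a : 'I_N -> R) :
  (\sum_(t < N) a t) ^+ 2 / N%:R <= \sum_(t < N) a t ^+ 2.
Proof.
case: N a => [|N] a; first by rewrite !big_ord0 expr0n /= mul0r.
set S := \sum_(t < _) a t; set c := S / N.+1%:R.
have hN : (N.+1%:R : R) != 0 by rewrite pnatr_eq0.
have h : 0 <= \sum_(t < N.+1) (a t - c) ^+ 2 by apply: sumr_ge0 => t _; exact: sqr_ge0.
have E : \sum_(t < N.+1) (a t - c) ^+ 2 =
    \sum_(t < N.+1) a t ^+ 2 - 2 * c * S + c ^+ 2 * N.+1%:R.
  rewrite /S mulr_sumr -sumrB.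
  have -> : c ^+ 2 * N.+1%:R = \sum_(t < N.+1) c ^+ 2.
    by rewrite sumr_const card_ord mulr_natr.
  rewrite -big_split /=; apply: eq_bigr => t _; ring.
rewrite E in h.
have -> : S ^+ 2 / N.+1%:R = 2 * c * S - c ^+ 2 * N.+1%:R.
  by rewrite /c; field; rewrite -natr1 addrC in hN.
rewrite -subr_ge0; move: h; set Q := \sum_(t < _) _ ^+ 2.
move=> h; have -> : Q - (2 * c * S - c ^+ 2 * N.+1%:R) = Q - 2 * c * S + c ^+ 2 * N.+1%:R by ring.
exact: h.
Qed.

Lemma pot_eq (V : finType) (R : realFieldType) (e : rel V) (l : V -> R) prop acc :
  valid_proposals e l prop -> valid_acceptances l prop acc ->
  potential l - potential (new_loads l prop acc) =
  \sum_u (l u ^+ 2 - new_loads l prop acc u ^+ 2).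
Proof.
move=> hp ha.
have hsum : \sum_u (l u - new_loads l prop acc u) = 0.
  rewrite /new_loads.
  have -> : \sum_u (l u - (l u - sent l prop acc u + received l acc u)) =
     \sum_u sent l prop acc u - \sum_u received l acc u.
    by rewrite -sumrB; apply: eq_bigr => u _; ring.
  by rewrite (sum_sent ha) subrr.
have havg : Lavg (new_loads l prop acc) = Lavg l.
  rewrite /Lavg; congr (_ / _); apply/eqP; rewrite -subr_eq0 -sumrB.
  rewrite -oppr_eq0 -sumrN; apply/eqP; rewrite -[RHS]hsum; apply: eq_bigr => u _; ring.
rewrite /potential havg; set c := Lavg l.
rewrite -sumrB.
have -> : \sum_u ((l u - c) ^+ 2 - (new_loads l prop acc u - c) ^+ 2) =
  \sum_u (l u ^+ 2 - new_loads l prop acc u ^+ 2) - 2 * c * \sum_u (l u - new_loads l prop acc u).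
  rewrite mulr_sumr -sumrB; apply: eq_bigr => u _; ring.
by rewrite hsum mulr0 subr0.
Qed.

Theorem lemma2 (V : finType) (e : rel V) (D : nat) (R : realFieldType)
    (l l' : V -> R) (K : R) :
  simple_graph e -> connected_graph e -> (1 < #|V|)%N -> is_diameter e D ->
  (forall u, 0 <= l u) ->
  is_discrepancy l K ->
  alg1_round e l l' ->
  potential l - potential l' >= K ^+ 2 / (2 * D%:R).
Proof.
move=> _ _ _ [hd _] _ [umax [umin [hK hb]]] [prop [acc [hp ha ->]]].
have hall u : u \in lev e umin D.
  have [k [hk [p [hpath hlast hsize]]]] := hd u umin.
  apply: (subsetP (lev_mono e umin hk)); rewrite -hsize; exact: walk_lev.
have hMD : l (m e l umin D) = l umax.
  have [h1 h2] := m_prop e l umin D.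
  have := h2 _ (hall umax); have [_ ?] := hb (m e l umin D); lra.
have hM0 : m e l umin 0 = umin.
  by have [h1 _] := m_prop e l umin 0; move: h1; rewrite /= inE => /eqP.
have hKs : K = \sum_(t < D) (l (m e l umin t.+1) - l (m e l umin t)).
  by rewrite telesc hMD hM0 hK.
rewrite (pot_eq hp ha).
apply: le_trans (sq_decrease hp ha).
have h1 := cs (fun t : 'I_D => l (m e l umin t.+1) - l (m e l umin t)).
rewrite -hKs in h1.
have h2 := Part3_total umin hp ha D.
have -> : \sum_v 2 * received l acc v ^+ 2 = (\sum_v (2 * received l acc v) ^+ 2) / 2.
  rewrite mulr_suml; apply: eq_bigr => v _; by field.
have -> : K ^+ 2 / (2 * D%:R) = K ^+ 2 / D%:R / 2 by rewrite invfM; ring.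
rewrite ler_pM2r ?invr_gt0 //; exact: le_trans h1 h2.
Qed.
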